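(* For every set of formulas $\Gamma$ and every formula $\alpha$: if $\Gamma \vDash_{\bf Km} \alpha$ then $\Gamma \vdash_{\bf Km} \alpha$.
   Context: Formulas are built from a denumerable set of propositional variables $p_1,p_2,\ldots$ by the unary connectives $\neg$, $\Box$ and the binary connective $\to$; $For$ is the set of all formulas. Abbreviations: $\Diamond\alpha:=\neg\Box\neg\alpha$, $\alpha\vee\beta:=\neg\alpha\to\beta$, $\alpha\wedge\beta:=\neg(\alpha\to\neg\beta)$. Hilbert calculus ${\bf Km}$: axioms are all instances (over $For$) of the axiom schemas of a standard Hilbert calculus for classical propositional logic in the signature $\{\neg,\to\}$, together with all instances of: (K') $\Diamond\alpha\to(\Box(\alpha\to\beta)\to(\Box\alpha\to\Box\beta))$; (K1') $\Diamond\neg\beta\to(\Box(\alpha\to\beta)\to(\Diamond\alpha\to\Diamond\beta))$; (K2') $\Diamond\alpha\to(\Diamond(\alpha\to\beta)\to(\Box\alpha\to\Diamond\beta))$; (M3') $(\Diamond\alpha\vee\Diamond\neg\alpha)\to(\Diamond\beta\to\Diamond(\alpha\to\beta))$; (M4') $\Diamond\neg\beta\to(\Diamond\neg\alpha\to\Diamond(\alpha\to\beta))$; (I1) $(\Box\alpha\wedge\Box\neg\alpha)\to(\Box(\alpha\to\beta)\wedge\Box\neg(\alpha\to\beta))$; (I2) $(\Box\beta\wedge\Box\neg\beta)\to(\Box(\alpha\to\beta)\wedge\Box\neg(\alpha\to\beta))$; (M1) $\neg\Diamond\alpha\to\Box(\alpha\to\beta)$; (M2) $\Box\beta\to\Box(\alpha\to\beta)$;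 (DN1) $\Box\alpha\to\Box\neg\neg\alpha$; (DN2) $\Box\neg\neg\alpha\to\Box\alpha$. Modus ponens is the only inference rule; $\Gamma\vdash_{\bf Km}\alpha$ means there is a derivation of $\alpha$ from $\Gamma$. Nmatrix semantics: an Nmatrix has a domain $A$, a set $D\subseteq A$ of designated values and, for each connective, a multioperation assigning to each tuple of arguments a nonempty subset of $A$. A valuation is a map $v:For\to A$ with $v(\neg\alpha)\in\tilde\neg(v(\alpha))$, $v(\Box\alpha)\in\tilde\Box(v(\alpha))$, $v(\alpha\to\beta)\in v(\alpha)\tilde\to v(\beta)$. $\Gamma\vDash\alpha$ iff every valuation $v$ with $v(\gamma)\in D$ for all $\gamma\in\Gamma$ has $v(\alpha)\in D$. The Nmatrix for ${\bf Km}$ (consequence $\vDash_{\bf Km}$): domain $\{T^+,C^+,F^+,I^+,T^-,C^-,F^-,I^-\}$, designated set $+=\{T^+,C^+,F^+,I^+\}$, and $-=\{T^-,C^-,F^-,I^-\}$. Negation: $\tilde\neg T^+=\{F^-\}$, $\tilde\neg C^+=\{C^-\}$, $\tilde\neg F^+=\{T^-\}$, $\tilde\neg I^+=\{I^-\}$, $\tilde\neg T^-=\{F^+\}$, $\tilde\neg C^-=\{C^+\}$, $\tilde\neg F^-=\{T^+\}$, $\tilde\neg I^-=\{I^+\}$. Necessity: $\tilde\Box x=+$ if $x\in\{T^+,T^-,I^+,I^-\}$, and $\tilde\Box x=-$ otherwise. Implication (row $x$, column $y$ gives $x\tilde\to y$): $$\begin{array}{c|cccccccc} \to & T^+ & C^+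 & F^+ & I^+ & T^- & C^- & F^- & I^-\\\hline T^+ & \{T^+\}&\{C^+\}&\{F^+\}&\{I^+\}&\{T^-\}&\{C^-\}&\{F^-\}&\{I^-\}\\ C^+ & \{T^+\}&\{T^+,C^+\}&\{C^+\}&\{I^+\}&\{T^-\}&\{T^-,C^-\}&\{C^-\}&\{I^-\}\\ F^+ & \{T^+\}&\{T^+\}&\{T^+\}&\{I^+\}&\{T^-\}&\{T^-\}&\{T^-\}&\{I^-\}\\ I^+ & \{I^+\}&\{I^+\}&\{I^+\}&\{I^+\}&\{I^-\}&\{I^-\}&\{I^-\}&\{I^-\}\\ T^- & \{T^+\}&\{C^+\}&\{F^+\}&\{I^+\}&\{T^+\}&\{C^+\}&\{F^+\}&\{I^+\}\\ C^- & \{T^+\}&\{T^+,C^+\}&\{C^+\}&\{I^+\}&\{T^+\}&\{T^+,C^+\}&\{C^+\}&\{I^+\}\\ F^- & \{T^+\}&\{T^+\}&\{T^+\}&\{I^+\}&\{T^+\}&\{T^+\}&\{T^+\}&\{I^+\}\\ I^- & \{I^+\}&\{I^+\}&\{I^+\}&\{I^+\}&\{I^+\}&\{I^+\}&\{I^+\}&\{I^+\}\end{array}$$ *)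

(* Defs.v *)
From Stdlib Require Import List.
Import ListNotations.

Inductive Formula : Type :=
| Var : nat -> Formula
| Neg : Formula -> Formula
| Box : Formula -> Formula
| Imp : Formula -> Formula -> Formula.

Definition Dia (a : Formula) : Formula := Neg (Box (Neg a)).
Definition Or (a b : Formula) : Formula := Imp (Neg a) b.
Definition And (a b : Formula) : Formula := Neg (Imp a (Neg b)).

(* Classical propositional part: the standard (Lukasiewicz/Mendelson-style)
   axiom schemas for the signature {Neg, Imp}. *)
Inductive KmAxiom : Formula -> Prop :=
| ax_A1 : forall a b, KmAxiom (Imp a (Imp b a))
| ax_A2 : forall a b c,
    KmAxiom (Imp (Imp a (Imp b c)) (Imp (Imp a b) (Imp a c)))
| ax_A3 : forall a b,
    KmAxiom (Imp (Imp (Neg a) (Neg b)) (Imp b a))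
| ax_K' : forall a b,
    KmAxiom (Imp (Dia a) (Imp (Box (Imp a b)) (Imp (Box a) (Box b))))
| ax_K1' : forall a b,
    KmAxiom (Imp (Dia (Neg b)) (Imp (Box (Imp a b)) (Imp (Dia a) (Dia b))))
| ax_K2' : forall a b,
    KmAxiom (Imp (Dia a) (Imp (Dia (Imp a b)) (Imp (Box a) (Dia b))))
| ax_M3' : forall a b,
    KmAxiom (Imp (Or (Dia a) (Dia (Neg a))) (Imp (Dia b) (Dia (Imp a b))))
| ax_M4' : forall a b,
    KmAxiom (Imp (Dia (Neg b)) (Imp (Dia (Neg a)) (Dia (Imp a b))))
| ax_I1 : forall a b,
    KmAxiom (Imp (And (Box a) (Box (Neg a)))
                 (And (Box (Imp a b)) (Box (Neg (Imp a b)))))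
| ax_I2 : forall a b,
    KmAxiom (Imp (And (Box b) (Box (Neg b)))
                 (And (Box (Imp a b)) (Box (Neg (Imp a b)))))
| ax_M1 : forall a b, KmAxiom (Imp (Neg (Dia a)) (Box (Imp a b)))
| ax_M2 : forall a b, KmAxiom (Imp (Box b) (Box (Imp a b)))
| ax_DN1 : forall a, KmAxiom (Imp (Box a) (Box (Neg (Neg a))))
| ax_DN2 : forall a, KmAxiom (Imp (Box (Neg (Neg a))) (Box a)).

Inductive KmDerivable (Gamma : Formula -> Prop) : Formula -> Prop :=
| der_hyp : forall a, Gamma a -> KmDerivable Gamma a
| der_ax : forall a, KmAxiom a -> KmDerivable Gamma a
| der_mp : forall a b,
    KmDerivable Gamma a -> KmDerivable Gamma (Imp a b) -> KmDerivable Gamma b.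

Inductive V8 : Type := Tp | Cp | Fp | Ip | Tm | Cm | Fm | Im.
(* Tp = T^+, Cp = C^+, ..., Tm = T^-, ..., Im = I^- *)

Definition designated (x : V8) : Prop :=
  match x with Tp | Cp | Fp | Ip => True | _ => False end.

Definition neg_nm (x : V8) : list V8 :=
  match x with
  | Tp => [Fm] | Cp => [Cm] | Fp => [Tm] | Ip => [Im]
  | Tm => [Fp] | Cm => [Cp] | Fm => [Tp] | Im => [Ip]
  end.

Definition plus_set : list V8 := [Tp; Cp; Fp; Ip].
Definition minus_set : list V8 := [Tm; Cm; Fm; Im].

Definition box_nm (x : V8) : list V8 :=
  match x with
  | Tp | Tm | Ip | Im => plus_set
  | _ => minus_set
  end.

Definition imp_nm (x y : V8) : list V8 :=
  match x with
  | Tp => match y with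
          | Tp => [Tp] | Cp => [Cp] | Fp => [Fp] | Ip => [Ip]
          | Tm => [Tm] | Cm => [Cm] | Fm => [Fm] | Im => [Im] end
  | Cp => match y with
          | Tp => [Tp] | Cp => [Tp; Cp] | Fp => [Cp] | Ip => [Ip]
          | Tm => [Tm] | Cm => [Tm; Cm] | Fm => [Cm] | Im => [Im] end
  | Fp => match y with
          | Tp => [Tp] | Cp => [Tp] | Fp => [Tp] | Ip => [Ip]
          | Tm => [Tm] | Cm => [Tm] | Fm => [Tm] | Im => [Im] end
  | Ip => match y with
          | Tp => [Ip] | Cp => [Ip] | Fp => [Ip] | Ip => [Ip]
          | Tm => [Im] | Cm => [Im] | Fm => [Im] | Im => [Im] end
  | Tm => match y with
          | Tp => [Tp] | Cp => [Cp] | Fp => [Fp] | Ip => [Ip]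
          | Tm => [Tp] | Cm => [Cp] | Fm => [Fp] | Im => [Ip] end
  | Cm => match y with
          | Tp => [Tp] | Cp => [Tp; Cp] | Fp => [Cp] | Ip => [Ip]
          | Tm => [Tp] | Cm => [Tp; Cp] | Fm => [Cp] | Im => [Ip] end
  | Fm => match y with
          | Tp => [Tp] | Cp => [Tp] | Fp => [Tp] | Ip => [Ip]
          | Tm => [Tp] | Cm => [Tp] | Fm => [Tp] | Im => [Ip] end
  | Im => match y with
          | Tp => [Ip] | Cp => [Ip] | Fp => [Ip] | Ip => [Ip]
          | Tm => [Ip] | Cm => [Ip] | Fm => [Ip] | Im => [Ip] end
  end.

Definition KmValuation (v : Formula -> V8) : Prop :=
  (forall a, In (v (Neg a)) (neg_nm (v a))) /\
  (forall a, In (v (Box a)) (box_nm (v a))) /\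
  (forall a b, In (v (Imp a b)) (imp_nm (v a) (v b))).

Definition KmEntails (Gamma : Formula -> Prop) (a : Formula) : Prop :=
  forall v : Formula -> V8, KmValuation v ->
    (forall g, Gamma g -> designated (v g)) -> designated (v a).

(* Main.v *)
Require Import Defs.
From Stdlib Require Import List Classical ClassicalEpsilon Arith Lia.
From Stdlib Require Cantor.
Import ListNotations.

Definition add (G : Formula -> Prop) (b : Formula) : Formula -> Prop :=
  fun x => G x \/ x = b.

Lemma der_mono G G' a : (forall x, G x -> G' x) -> KmDerivable G a -> KmDerivable G' a.
Proof.
  intros H D; induction D.
  - apply der_hyp; auto.
  - apply der_ax; auto.
  - eapply der_mp; [exact IHD1 | exact IHD2].
Qed.

Lemma der_I G a : KmDerivable G (Imp a a).
Proof.
  eapply der_mp. apply der_ax, (ax_A1 a a).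
  eapply der_mp. apply der_ax, (ax_A1 a (Imp a a)).
  apply der_ax, (ax_A2 a (Imp a a) a).
Qed.

Lemma DT G b c : KmDerivable (add G b) c -> KmDerivable G (Imp b c).
Proof.
  intro D; induction D.
  - destruct H as [H|H].
    + eapply der_mp. apply der_hyp, H. apply der_ax, ax_A1.
    + subst. apply der_I.
  - eapply der_mp. apply der_ax, H. apply der_ax, ax_A1.
  - eapply der_mp. exact IHD1. eapply der_mp. exact IHD2. apply der_ax, ax_A2.
Qed.

Lemma hyp_add G b : KmDerivable (add G b) b.
Proof. apply der_hyp; right; reflexivity. Qed.

Lemma lift G b c : KmDerivable G c -> KmDerivable (add G b) c.
Proof. apply der_mono; intros; left; auto. Qed.

Lemma MP G a b : KmDerivable G (Imp a b) -> KmDerivable G a -> KmDerivable G b.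
Proof. intros; eapply der_mp; eauto. Qed.

Lemma A3 G a b : KmDerivable G (Imp (Imp (Neg a) (Neg b)) (Imp b a)).
Proof. apply der_ax, ax_A3. Qed.
Lemma A1 G a b : KmDerivable G (Imp a (Imp b a)).
Proof. apply der_ax, ax_A1. Qed.

Lemma Lc G a b : KmDerivable G (Imp (Neg a) (Imp a b)).
Proof.
  apply DT. eapply MP. apply A3. eapply MP. apply A1. apply hyp_add.
Qed.

Lemma La G b : KmDerivable G (Imp (Neg (Neg b)) b).
Proof.
  apply DT. set (G' := add G (Neg (Neg b))).
  assert (KmDerivable G' (Imp (Neg (Neg (Neg (Neg b)))) (Neg (Neg b)))).
  { eapply MP. apply A1. apply hyp_add. }
  assert (KmDerivable G' (Imp (Neg b) (Neg (Neg (Neg b))))).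
  { eapply MP. apply A3. auto. }
  assert (KmDerivable G' (Imp (Neg (Neg b)) b)).
  { eapply MP. apply A3. auto. }
  eapply MP. eauto. apply hyp_add.
Qed.

Lemma Lb G b : KmDerivable G (Imp b (Neg (Neg b))).
Proof. eapply MP. apply A3. apply La. Qed.

Lemma Le G a b : KmDerivable G (Imp (Imp a b) (Imp (Neg b) (Neg a))).
Proof.
  apply DT. eapply MP. apply A3. apply DT.
  eapply MP. apply Lb. eapply MP. apply lift, hyp_add.
  eapply MP. apply La. apply hyp_add.
Qed.

Lemma Lg G a b : KmDerivable G (Imp a b) -> KmDerivable G (Imp (Neg a) b) -> KmDerivable G b.
Proof.
  intros H1 H2.
  assert (E1 : KmDerivable G (Imp (Neg b) (Neg a))) by (eapply MP; [apply Le|exact H1]).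
  assert (E2 : KmDerivable G (Imp (Neg b) (Neg (Neg a)))) by (eapply MP; [apply Le|exact H2]).
  assert (E3 : KmDerivable G (Imp (Neg b) (Neg (Imp b b)))).
  { apply DT. eapply MP. eapply MP. apply Lc.
    eapply MP. apply lift, E2. apply hyp_add.
    eapply MP. apply lift, E1. apply hyp_add. }
  eapply MP. eapply MP. apply A3. exact E3. apply der_I.
Qed.

Definition pr (a b : nat) : nat := Cantor.to_nat (a, b).

Lemma pr_inj a b c d : pr a b = pr c d -> a = c /\ b = d.
Proof.
  unfold pr; intro H.
  assert (E : (a, b) = (c, d)).
  { rewrite <- (Cantor.cancel_of_to (a,b)), <- (Cantor.cancel_of_to (c,d)), H. reflexivity. }
  inversion E; auto.
Qed.

Fixpoint enc (f : Formula) : nat :=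
  match f with
  | Var n => pr 0 n
  | Neg a => pr 1 (enc a)
  | Box a => pr 2 (enc a)
  | Imp a b => pr 3 (pr (enc a) (enc b))
  end.

Lemma enc_inj : forall f g, enc f = enc g -> f = g.
Proof.
  induction f; destruct g; cbn [enc]; intro H; apply pr_inj in H; destruct H as [H1 H2];
    try discriminate; subst; auto.
  - f_equal; auto.
  - f_equal; auto.
  - apply pr_inj in H2. destruct H2. f_equal; auto.
Qed.

Fixpoint chain (Gamma : Formula -> Prop) (alpha : Formula) (n : nat) : Formula -> Prop :=
  match n with
  | 0 => Gamma
  | S n => fun x => chain Gamma alpha n x \/
                    (enc x = n /\ ~ KmDerivable (add (chain Gamma alpha n) x) alpha)
  end.

Definition Delta Gamma alpha x := exists n, chain Gamma alpha n x.

Lemma chain_mono Gamma alpha n m x : n <= m -> chain Gamma alpha n x -> chain Gamma alpha m x.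
Proof. induction 1; simpl; auto. Qed.

Lemma chain_not Gamma alpha : ~ KmDerivable Gamma alpha ->
  forall n, ~ KmDerivable (chain Gamma alpha n) alpha.
Proof.
  intros H0 n; induction n; simpl; auto.
  destruct (classic (exists x0, enc x0 = n /\ ~ KmDerivable (add (chain Gamma alpha n) x0) alpha))
    as [[x0 [E N]]|NE].
  - intro D; apply N. revert D; apply der_mono.
    intros x [Hx|[Ex Nx]]; [left; auto|right]. apply enc_inj; congruence.
  - intro D; apply IHn. revert D; apply der_mono.
    intros x [Hx|[Ex Nx]]; auto. exfalso; apply NE; eauto.
Qed.

Lemma compact Gamma alpha a : KmDerivable (Delta Gamma alpha) a ->
  exists n, KmDerivable (chain Gamma alpha n) a.
Proof.
  induction 1.
  - destruct H as [n Hn]. exists n. apply der_hyp; auto.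
  - exists 0. apply der_ax; auto.
  - destruct IHKmDerivable1 as [n1 D1], IHKmDerivable2 as [n2 D2].
    exists (max n1 n2). apply (der_mp _ a b).
    + revert D1; apply der_mono; intros x Hx; eapply chain_mono; [|exact Hx]; lia.
    + revert D2; apply der_mono; intros x Hx; eapply chain_mono; [|exact Hx]; lia.
Qed.

Lemma delta_not Gamma alpha : ~ KmDerivable Gamma alpha -> ~ KmDerivable (Delta Gamma alpha) alpha.
Proof. intros H D. destruct (compact _ _ _ D) as [n Dn]. eapply chain_not; eauto. Qed.

Lemma delta_max Gamma alpha b : ~ KmDerivable (add (Delta Gamma alpha) b) alpha -> Delta Gamma alpha b.
Proof.
  intro N. exists (S (enc b)). simpl. right. split; auto.
  intro D; apply N; revert D; apply der_mono.
  intros x [Hx|Hx]; [left; exists (enc b); auto | right; auto].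
Qed.

Lemma closedD (D : Formula -> Prop) alpha
  (Hn : ~ KmDerivable D alpha) (Hm : forall b, ~ KmDerivable (add D b) alpha -> D b) b :
  KmDerivable D b -> D b.
Proof.
  intro Db. apply Hm. intro E. apply Hn. eapply MP. apply DT, E. exact Db.
Qed.

Lemma negD (D : Formula -> Prop) alpha
  (Hn : ~ KmDerivable D alpha) (Hm : forall b, ~ KmDerivable (add D b) alpha -> D b) b :
  D (Neg b) <-> ~ D b.
Proof.
  split.
  - intros H1 H2. apply Hn. eapply MP. eapply MP. apply Lc. apply der_hyp, H1. apply der_hyp, H2.
  - intro H. apply Hm. intro E. apply Hn.
    assert (E0 : KmDerivable (add D b) alpha).
    { apply NNPP. intro N. apply H, Hm, N. }
    eapply Lg; apply DT; eauto.
Qed.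

Lemma impD (D : Formula -> Prop) alpha
  (Hn : ~ KmDerivable D alpha) (Hm : forall b, ~ KmDerivable (add D b) alpha -> D b) a b :
  D (Imp a b) <-> (D a -> D b).
Proof.
  split.
  - intros H1 H2. eapply closedD; eauto. eapply MP; apply der_hyp; eauto.
  - intro H. destruct (classic (D a)) as [Ha|Ha].
    + eapply closedD; eauto. eapply MP. apply A1. apply der_hyp; auto.
    + apply (negD D alpha Hn Hm) in Ha. eapply closedD; eauto.
      eapply MP. apply Lc. apply der_hyp; auto.
Qed.

Definition dec (P : Prop) : bool := if excluded_middle_informative P then true else false.

Lemma decP P : dec P = true <-> P.
Proof. unfold dec; destruct (excluded_middle_informative P); split; auto; discriminate. Qed.

Lemma decF P : dec P = false <-> ~ P.
Proof. unfold dec; destruct (excluded_middle_informative P); split; auto; try discriminate; tauto. Qed.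

Lemma decT P : dec P = true -> P. Proof. apply decP. Qed.
Lemma Tdec P : P -> dec P = true. Proof. apply decP. Qed.
Lemma decFl P : dec P = false -> ~ P. Proof. apply decF. Qed.
Lemma Fdec P : ~ P -> dec P = false. Proof. apply decF. Qed.

Definition mk (s b n : bool) : V8 :=
  match s, b, n with
  | true, true, false => Tp | true, false, false => Cp
  | true, false, true => Fp | true, true, true => Ip
  | false, true, false => Tm | false, false, false => Cm
  | false, false, true => Fm | false, true, true => Im
  end.

Lemma imp_ok sa sb ba na bb nb bI nI :
  implb (ba && na) (bI && nI) = true ->
  implb (bb && nb) (bI && nI) = true ->
  implb na bI = true ->
  implb bb bI = true ->
  implb (negb na) (implb bI (implb ba bb)) = true ->
  implb (negb bb) (implb bI (implb (negb na) (negb nb))) = true ->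
  implb (negb na) (implb (negb nI) (implb ba (negb nb))) = true ->
  implb (negb na || negb ba) (implb (negb nb) (negb nI)) = true ->
  implb (negb bb) (implb (negb ba) (negb nI)) = true ->
  In (mk (implb sa sb) bI nI) (imp_nm (mk sa ba na) (mk sb bb nb)).
Proof.
  destruct sa, sb, ba, na, bb, nb, bI, nI; simpl; intros; try discriminate; tauto.
Qed.

Lemma sound_val (D : Formula -> Prop) alpha
  (Hn : ~ KmDerivable D alpha) (Hm : forall b, ~ KmDerivable (add D b) alpha -> D b) :
  KmValuation (fun f => mk (dec (D f)) (dec (D (Box f))) (dec (D (Box (Neg f))))).
Proof.
  assert (dN : forall a, dec (D (Neg a)) = negb (dec (D a))).
  { intro a. destruct (dec (D a)) eqn:E.
    - apply decT in E. apply Fdec. rewrite (negD D alpha Hn Hm). tauto.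
    - apply decFl in E. apply Tdec. rewrite (negD D alpha Hn Hm). tauto. }
  assert (dI : forall a b, dec (D (Imp a b)) = implb (dec (D a)) (dec (D b))).
  { intros a b. destruct (dec (D a)) eqn:Ea, (dec (D b)) eqn:Eb; simpl;
    first [apply Tdec | apply Fdec]; rewrite (impD D alpha Hn Hm);
    first [apply decT in Ea | apply decFl in Ea]; first [apply decT in Eb | apply decFl in Eb]; tauto. }
  assert (dA : forall f, KmAxiom f -> dec (D f) = true).
  { intros f Hf. apply Tdec. eapply closedD; eauto. apply der_ax; auto. }
  assert (dDN : forall a, dec (D (Box (Neg (Neg a)))) = dec (D (Box a))).
  { intro a. pose proof (dA _ (ax_DN1 a)) as H1. pose proof (dA _ (ax_DN2 a)) as H2.
    rewrite dI in H1, H2. destruct (dec (D (Box (Neg (Neg a))))), (dec (D (Box a))); auto. }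
  split; [|split].
  - intro a. rewrite dN, dDN.
    destruct (dec (D a)), (dec (D (Box a))), (dec (D (Box (Neg a)))); simpl; tauto.
  - intro a. destruct (dec (D a)), (dec (D (Box a))), (dec (D (Box (Neg a)))),
      (dec (D (Box (Box a)))), (dec (D (Box (Neg (Box a))))); simpl; tauto.
  - intros a b. rewrite dI.
    pose proof (dA _ (ax_I1 a b)) as h1.
    pose proof (dA _ (ax_I2 a b)) as h2.
    pose proof (dA _ (ax_M1 a b)) as h3.
    pose proof (dA _ (ax_M2 a b)) as h4.
    pose proof (dA _ (ax_K' a b)) as h5.
    pose proof (dA _ (ax_K1' a b)) as h6.
    pose proof (dA _ (ax_K2' a b)) as h7.
    pose proof (dA _ (ax_M3' a b)) as h8.
    pose proof (dA _ (ax_M4' a b)) as h9.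
    unfold Dia, Or, And in *.
    Ltac nrm dI dN dDN h := repeat (first [rewrite dI in h | rewrite dN in h | rewrite dDN in h]).
    nrm dI dN dDN h1; nrm dI dN dDN h2; nrm dI dN dDN h3; nrm dI dN dDN h4; nrm dI dN dDN h5;
    nrm dI dN dDN h6; nrm dI dN dDN h7; nrm dI dN dDN h8; nrm dI dN dDN h9.
    apply imp_ok.
    + destruct (dec (D (Box a))), (dec (D (Box (Neg a)))), (dec (D (Box (Imp a b)))), (dec (D (Box (Neg (Imp a b))))); simpl in *; auto.
    + destruct (dec (D (Box b))), (dec (D (Box (Neg b)))), (dec (D (Box (Imp a b)))), (dec (D (Box (Neg (Imp a b))))); simpl in *; auto.
    + destruct (dec (D (Box (Neg a)))), (dec (D (Box (Imp a b)))); simpl in *; auto.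
    + exact h4.
    + exact h5.
    + exact h6.
    + exact h7.
    + destruct (dec (D (Box (Neg a)))), (dec (D (Box a))), (dec (D (Box (Neg b)))), (dec (D (Box (Neg (Imp a b))))); simpl in *; auto.
    + exact h9.
Qed.

Theorem mainTheorem2 :
  forall (Gamma : Formula -> Prop) (alpha : Formula),
    KmEntails Gamma alpha -> KmDerivable Gamma alpha.
Proof.
  intros Gamma alpha HE. apply NNPP. intro N.
  pose proof (delta_not _ _ N) as Hn.
  pose proof (delta_max Gamma alpha) as Hm.
  pose proof (sound_val _ _ Hn Hm) as HV.
  specialize (HE _ HV).
  assert (Hd : forall s b n, designated (mk s b n) -> s = true)
    by (intros [] [] []; simpl; tauto).
  assert (Hd' : forall b n, designated (mk true b n)) by (intros [] []; simpl; tauto).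
  apply Hd in HE.
  - apply decT in HE. apply Hn. apply der_hyp. exact HE.
  - intros g Hg. assert (E : dec (Delta Gamma alpha g) = true).
    { apply Tdec. exists 0. exact Hg. }
    rewrite E. apply Hd'.
Qed.
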